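(* Let $n$ be a positive integer divisible by $q-1$ with $l(n)\ge3(q-1)$, let $\beta\in\mathcal{M}_2(n)$ be an ordered tuple that is maximal for $|\cdot|_1$ (among all of $\mathcal{M}_2(n)$), and let $e$ be the number of even entries of $\beta$. (i) If $e=q-1$, then $|\beta|_1=|\beta|_2$ and $\beta$ is maximal for $|\cdot|_2$. (ii) If $0\le e<q-1$, let $\mu$ be obtained from $\beta$ by replacing every entry $\beta_j$ with $1\le j\le q-1$ and $\beta_j\le\beta_{q-1}$ by $\beta_{q-1}-1$; then $\mu\in\mathcal{M}_2(n)$ is ordered and maximal for $|\cdot|_2$. (iii) If $q-1<e\le2(q-1)$, let $\mu$ be obtained from $\beta$ by replacing every entry $\beta_j$ with $q\le j\le2(q-1)$ and $\beta_j\le\beta_q$ by $\beta_q-1$; then $\mu\in\mathcal{M}_2(n)$ is ordered and maximal for $|\cdot|_2$.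
   Context: For $n=\sum_in_iq^i$ in base $q$, $l(n)=\sum_in_i$. For $\beta\in\mathbb{N}^{2(q-1)}$, $|\beta|_1=\sum_iq^{\beta_i}$; $\mathcal{M}_2(n)=\{\beta\in\mathbb{N}^{2(q-1)}:|\beta|_1\le n\}$; $\mu$ is maximal for $|\cdot|_1$ if $|\mu|_1\ge|\beta|_1$ for all $\beta\in\mathcal{M}_2(n)$. A tuple $\beta\in\mathbb{N}^{2(q-1)}$ is ordered if there is $e$ with $0\le e\le2(q-1)$ such that $\beta_1\ge\cdots\ge\beta_e$ are all even ($0$ counts as even) and $\beta_{e+1}\le\cdots\le\beta_{2(q-1)}$ are all odd (so $e$ is the number of even entries); for such $\beta$, $|\beta|_2=\sum_{i=1}^{\min\{e,q-1\}}q^{\beta_i}+\sum_{i=\max\{q,e+1\}}^{2(q-1)}q^{\beta_i}$. An ordered $\mu\in\mathcal{M}_2(n)$ is maximal for $|\cdot|_2$ if $|\mu|_2\ge|\gamma|_2$ for every ordered $\gamma\in\mathcal{M}_2(n)$. *)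

(* Defs.v *)
(* Tuples in N^{2(q-1)} are represented as seq nat of size
   2(q-1); the paper's 1-based index i corresponds to 0-based position i-1. *)
From mathcomp Require Import all_boot.
Set Implicit Arguments. Unset Strict Implicit. Unset Printing Implicit Defensive.

(* l(n): sum of base-q digits of n (valid for q >= 2: digit i is (n / q^i) mod q,
   and digits at positions > n vanish). *)
Definition digsum (q n : nat) : nat := \sum_(i < n.+1) ((n %/ q ^ i) %% q).

Definition norm1 (q : nat) (b : seq nat) : nat := \sum_(x <- b) q ^ x.

Definition M2 (q n : nat) (b : seq nat) : bool :=
  (size b == (q - 1).*2) && (norm1 q b <= n).

Definition nb_even (b : seq nat) : nat := count (fun x => ~~ odd x) b.

Definition ordered (b : seq nat) : Prop :=
  exists e, [/\ e <= size b,
     all (fun x => ~~ odd x) (take e b), sorted geq (take e b),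
     all odd (drop e b) & sorted leq (drop e b)].

(* |beta|_2 = sum_{i=1}^{min(e,q-1)} q^{beta_i} + sum_{i=max(q,e+1)}^{2(q-1)} q^{beta_i}
   (0-based: positions 0..min(e,q-1)-1 and max(q-1,e)..2(q-1)-1) *)
Definition norm2 (q : nat) (b : seq nat) : nat :=
  let e := nb_even b in
  \sum_(x <- take (minn e (q - 1)) b) q ^ x +
  \sum_(x <- drop (maxn (q - 1) e) b) q ^ x.

Definition maximal1 (q n : nat) (mu : seq nat) : Prop :=
  M2 q n mu /\ forall b, M2 q n b -> norm1 q b <= norm1 q mu.

Definition maximal2 (q n : nat) (mu : seq nat) : Prop :=
  [/\ ordered mu, M2 q n mu &
      forall g, ordered g -> M2 q n g -> norm2 q g <= norm2 q mu].

Definition mu_low (q : nat) (b : seq nat) : seq nat :=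
  let p := nth 0 b (q - 2) in
  [seq (if (j < q - 1) && (nth 0 b j <= p) then p - 1 else nth 0 b j)
  | j <- iota 0 (size b)].

Definition mu_high (q : nat) (b : seq nat) : seq nat :=
  let p := nth 0 b (q - 1) in
  [seq (if (q - 1 <= j) && (nth 0 b j <= p) then p - 1 else nth 0 b j)
  | j <- iota 0 (size b)].

(* Main.v *)
Require Import Defs.
From mathcomp Require Import all_boot zify.
Set Implicit Arguments. Unset Strict Implicit. Unset Printing Implicit Defensive.



Definition Dg (q f a : nat) := \sum_(i < f) ((a %/ q ^ i) %% q).

Lemma Dg0 q a : Dg q 0 a = 0.
Proof. by rewrite /Dg big_ord0. Qed.

Lemma DgS q f a : Dg q f.+1 a = a %% q + Dg q f (a %/ q).
Proof.
rewrite /Dg big_ord_recl /= expn0 divn1; congr (_ + _).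
by apply: eq_bigr => i _; rewrite /bump /= add1n expnS divnMA.
Qed.

Lemma Dg_addpow q f a x : 1 < q -> Dg q f (a + q ^ x) <= Dg q f a + 1.
Proof.
move=> q1; have q0 : 0 < q by lia.
elim: f a x => [|f IH] a x; first by rewrite !Dg0.
rewrite !DgS; case: x => [|x].
- rewrite expn0 modnD // divnD // (modn_small q1) (divn_small q1) addn0.
  case: (leqP q (a %% q + 1)) => H /=.
  + rewrite mul1n; have := IH (a %/ q) 0; rewrite expn0 => H2. lia.
  + rewrite mul0n subn0 addn0; lia.
- rewrite expnSr [a + _]addnC modnMDl [_ * q + a]addnC divnDMl //.
  have := IH (a %/ q) x; lia.
Qed.

Lemma Dg_add q f a b : 1 < q -> Dg q f (a + b) <= Dg q f a + Dg q f b.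
Proof.
move=> q1; have q0 : 0 < q by lia.
elim: f a b => [|f IH] a b; first by rewrite !Dg0.
rewrite !DgS modnD // divnD //.
set c := (q <= a %% q + b %% q).
have H1 : Dg q f (a %/ q + b %/ q + c) <= Dg q f (a %/ q + b %/ q) + c.
  rewrite /c; case: (q <= _) => /=; last by rewrite !addn0.
  by have := Dg_addpow f (a %/ q + b %/ q) 0 q1; rewrite expn0.
have H2 := IH (a %/ q) (b %/ q).
have H3 : c <= c * q by rewrite leq_pmulr.
lia.
Qed.

Lemma Dg_le q f a : 1 < q -> Dg q f a <= a.
Proof.
move=> q1; have q0 : 0 < q by lia.
elim: f a => [|f IH] a; first by rewrite Dg0.
rewrite DgS; have := IH (a %/ q); have := divn_eq a q.
have : a %/ q <= a %/ q * q by rewrite leq_pmulr.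
lia.
Qed.

Lemma Dg_zero q f : Dg q f 0 = 0.
Proof. by rewrite /Dg big1 // => i _; rewrite div0n mod0n. Qed.

Lemma norm1_cons q x s : norm1 q (x :: s) = q ^ x + norm1 q s.
Proof. by rewrite /norm1 big_cons. Qed.

Lemma norm1_cat q s t : norm1 q (s ++ t) = norm1 q s + norm1 q t.
Proof. by rewrite /norm1 big_cat. Qed.

Lemma Dg_norm1 q f s : 1 < q -> Dg q f (norm1 q s) <= size s.
Proof.
move=> q1; elim: s => [|x s IH]; first by rewrite /norm1 big_nil Dg_zero.
rewrite norm1_cons addnC /=; have := Dg_addpow f (norm1 q s) x q1; lia.
Qed.

Lemma slack q n s : 1 < q -> norm1 q s <= n -> digsum q n <= size s + (n - norm1 q s).
Proof.
move=> q1 H; rewrite /digsum -/(Dg q n.+1 n).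
have En : n = norm1 q s + (n - norm1 q s) by lia.
have := Dg_add n.+1 (norm1 q s) (n - norm1 q s) q1; rewrite -En.
have := Dg_norm1 n.+1 s q1. have := Dg_le n.+1 (n - norm1 q s) q1.
lia.
Qed.


Lemma sum_count N (P : pred nat) (F : nat -> nat) s :
  all (fun x => x < N) s ->
  \sum_(0 <= l < N | P l) count_mem l s * F l = \sum_(x <- s | P x) F x.
Proof.
elim: s => [|x s IH] /=.
  by rewrite big_nil big1 // => l _.
move=> /andP[xN /IH {}IH]; rewrite big_cons -IH.
under eq_bigr => l _ do rewrite mulnDl.
rewrite big_split /=.
have -> : \sum_(0 <= i < N | P i) (x == i) * F i = (if P x then F x else 0).
  rewrite big_mkcond (bigD1_seq x) ?mem_iota ?iota_uniq //=; last by lia.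
  rewrite eqxx mul1n big1; first by case: (P x); rewrite ?addn0.
  by move=> l /negPf lx; rewrite eq_sym lx mul0n; case: (P l).
by case: (P x).
Qed.

Lemma cnt_sum N (P : pred nat) s :
  all (fun x => x < N) s -> \sum_(0 <= l < N | P l) count_mem l s = count P s.
Proof.
move=> H; rewrite -sum1_count -(sum_count P (fun _ => 1) H).
by apply: eq_bigr => l _; rewrite muln1.
Qed.

Lemma val_sum q N s :
  all (fun x => x < N) s -> \sum_(0 <= l < N) count_mem l s * q ^ l = norm1 q s.
Proof. by move=> H; rewrite (sum_count predT (fun l => q ^ l) H). Qed.

Lemma geom q m : 0 < q -> \sum_(0 <= l < m) (q - 1) * q ^ l + 1 = q ^ m.
Proof.
move=> q0; elim: m => [|m IH]; first by rewrite big_geq.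
rewrite big_nat_recr //= -addnA [_ * _ + 1]addnC addnA IH expnS.
have : 0 < q ^ m by rewrite expn_gt0 q0.
set Q := q ^ m; nia.
Qed.

Lemma lex_lt q N (a b : nat -> nat) l0 : 0 < q -> l0 < N ->
  (forall l, l0 < l < N -> a l = b l) -> b l0 < a l0 ->
  (forall l, l < l0 -> b l <= q - 1) ->
  \sum_(0 <= l < N) b l * q ^ l < \sum_(0 <= l < N) a l * q ^ l.
Proof.
move=> q0 lN Hab Hl Hb.
rewrite (big_cat_nat (leq0n l0) (ltnW lN)) /=.
rewrite [X in _ < X](big_cat_nat (leq0n l0) (ltnW lN)) /= !(big_ltn lN).
have -> : \sum_(l0.+1 <= i < N) a i * q ^ i = \sum_(l0.+1 <= i < N) b i * q ^ i.
  by apply: eq_big_nat => i Hi; rewrite Hab.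
have H1 : \sum_(0 <= i < l0) b i * q ^ i <= \sum_(0 <= i < l0) (q - 1) * q ^ i.
  rewrite !big_seq; apply: leq_sum => i; rewrite mem_iota => /andP[_ H].
  by rewrite leq_mul2r Hb ?orbT //; lia.
have H2 := geom l0 q0.
have H3 : q ^ l0 + b l0 * q ^ l0 <= a l0 * q ^ l0 by rewrite -mulSn leq_mul2r Hl orbT.
lia.
Qed.

Lemma val_le q N (a b : nat -> nat) : (forall l, l < N -> a l <= b l) ->
  \sum_(0 <= l < N) a l * q ^ l <= \sum_(0 <= l < N) b l * q ^ l.
Proof.
move=> H; rewrite !big_seq; apply: leq_sum => i; rewrite mem_iota => /andP[_ Hi].
by rewrite leq_mul2r H ?orbT //; lia.
Qed.

Lemma lex_le q N (a b : nat -> nat) : 0 < q ->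
  (forall l0, l0 < N -> (forall l, l0 < l < N -> a l = b l) -> a l0 <= b l0) ->
  (forall l, l < N -> a l <= q - 1) ->
  \sum_(0 <= l < N) a l * q ^ l <= \sum_(0 <= l < N) b l * q ^ l.
Proof.
move=> q0 H Ha.
case: (boolP [exists l : 'I_N, a l != b l]) => [/existsP Ex | /existsPn Nx].
- have ex : exists l, (l < N) && (a l != b l).
    by case: Ex => l Hl; exists l; rewrite ltn_ord.
  have ub : forall l, (l < N) && (a l != b l) -> l <= N by move=> l /andP[/ltnW].
  case: (ex_maxnP ex ub) => l /andP[lN lne] Hmax.
  have agree : forall l', l < l' < N -> b l' = a l'.
    move=> l' /andP[ll' l'N]; apply/eqP; rewrite eq_sym; apply/negPn/negP => ne.
    by have := Hmax l'; rewrite l'N ne => /(_ isT); lia.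
  apply: ltnW; apply: (lex_lt q0 lN agree).
    rewrite ltn_neqAle lne H // => l' /andP[a1 a2]; by rewrite (agree l') ?a1 ?a2.
  by move=> l' l'l; apply: Ha; lia.
- apply: eq_leq; apply: eq_big_nat => i /andP[_ iN].
  by have /negPn/eqP -> := Nx (Ordinal iN).
Qed.






Lemma norm1_nseq q m x : norm1 q (nseq m x) = m * q ^ x.
Proof. by elim: m => [|m IH]; rewrite ?norm1_cons ?IH /norm1 ?big_nil //= mulSn. Qed.

Lemma pow_le_norm1 q x s : x \in s -> q ^ x <= norm1 q s.
Proof.
elim: s => [|y s IH] //=; rewrite in_cons norm1_cons => /orP[/eqP -> | /IH]; lia.
Qed.

Lemma elem_lt q n s x : 1 < q -> norm1 q s <= n -> x \in s -> x < n.+1.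
Proof.
move=> q1 H xs; have := pow_le_norm1 q xs; have := ltn_expl x q1; lia.
Qed.

Lemma all_lt q n s : 1 < q -> norm1 q s <= n -> all (fun x => x < n.+1) s.
Proof. by move=> q1 H; apply/allP => x xs; apply: (elem_lt q1 H xs). Qed.

Lemma norm1_split q v s :
  norm1 q s = count_mem v s * q ^ v + norm1 q (filter (predC1 v) s).
Proof.
elim: s => [|x s IH]; first by rewrite /norm1 big_nil.
rewrite /= norm1_cons IH; case: (eqVneq x v) => [-> | ne] /=.
  by rewrite mulnDl mul1n; lia.
by rewrite norm1_cons; lia.
Qed.

Lemma digits_mod q a f : 0 < q ->
  \sum_(0 <= l < f) ((a %/ q ^ l) %% q) * q ^ l = a %% q ^ f.
Proof.
move=> q0; elim: f => [|f IH]; first by rewrite big_geq // expn0 modn1.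
rewrite big_nat_recr //= IH.
have E1 := divn_eq a (q ^ f).
have E2 := divn_eq (a %/ q ^ f) q.
have L1 : a %% q ^ f < q ^ f by rewrite ltn_mod expn_gt0 q0.
have L2 : (a %/ q ^ f) %% q < q by rewrite ltn_mod.
have E3 : a = (a %/ q ^ f %/ q) * q ^ f.+1 + ((a %/ q ^ f) %% q * q ^ f + a %% q ^ f).
  rewrite expnSr; set Q := q ^ f; set u := a %/ Q %/ q; set w := a %/ Q %% q.
  rewrite -/Q in E1 E2 *; rewrite -/u -/w in E2; nia.
rewrite [X in _ = X %% _]E3 modnMDl.
rewrite expnS; set Q := q ^ f in L1 *; set w := a %/ Q %% q in L2 *.
have : Q + w * Q <= q * Q by rewrite -mulSn leq_mul2r L2 orbT.
move=> H; rewrite (@modn_small (w * Q + a %% Q)); lia.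
Qed.

Lemma digits_val q n : 1 < q ->
  \sum_(0 <= l < n.+1) ((n %/ q ^ l) %% q) * q ^ l = n.
Proof.
move=> q1; rewrite digits_mod ?modn_small //; last lia.
by apply: ltn_trans (ltn_expl _ q1); lia.
Qed.


Lemma mult_bound q n b : 1 < q -> size b = (q-1).*2 -> norm1 q b <= n ->
  3 * (q-1) <= digsum q n -> (forall c, M2 q n c -> norm1 q c <= norm1 q b) ->
  forall v, count_mem v b <= q - 1.
Proof.
move=> q1 sb nb ds mx v; rewrite leqNgt; apply/negP => cv.
set c := count_mem v b in cv.
set r := filter (predC1 v) b.
pose b' := v.+1 :: nseq (q-1) 0 ++ nseq (c - q) v ++ r.
have sr : size r = size b - c.
  rewrite size_filter; have := count_predC (pred1 v) b.
  have -> : count (predC1 v) b = count (predC (pred1 v)) b by apply: eq_count.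
  by move=> <-; rewrite addKn.
have Hn : norm1 q b = c * q ^ v + norm1 q r by apply: norm1_split.
have E : (c - q) * q ^ v + q * q ^ v = c * q ^ v by rewrite -mulnDl subnK //; lia.
have Hb' : norm1 q b' = norm1 q b + (q - 1).
  rewrite /b' norm1_cons !norm1_cat !norm1_nseq expn0 expnS Hn; lia.
have sl := slack q1 nb.
have M2b' : M2 q n b'.
  rewrite /M2 Hb'; apply/andP; split.
    have cs : c <= size b by apply: count_size.
    rewrite /b' /= !size_cat !size_nseq sr sb; apply/eqP; rewrite sb in cs; lia.
  lia.
have := mx _ M2b'; lia.
Qed.

Lemma count_filter_ge l0 l (s : seq nat) :
  count_mem l (filter (fun y => l0 <= y) s) = if l0 <= l then count_mem l s else 0.
Proof.
elim: s => [|x s IH] /=; first by case: ifP.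
case: (leqP l0 x) => H /=; rewrite IH; case: (eqVneq x l) => [E|ne] /=.
- by subst x; rewrite H.
- by case: ifP.
- by subst x; rewrite leqNgt H.
- by case: ifP.
Qed.

Lemma top_struct q n b : 1 < q -> size b = (q-1).*2 -> norm1 q b <= n ->
  3 * (q-1) <= digsum q n -> (forall c, M2 q n c -> norm1 q c <= norm1 q b) ->
  forall p, p \in b ->
  (forall l, p < l -> l < n.+1 -> count_mem l b = (n %/ q ^ l) %% q) /\
  count_mem p b <= (n %/ q ^ p) %% q.
Proof.
move=> q1 sb nb ds mx.
have q0 : 0 < q by lia.
set N := n.+1; set d := fun l => (n %/ q ^ l) %% q.
have allb := all_lt q1 nb.
have mb := mult_bound q1 sb nb ds mx.
have dq : forall l, l < N -> d l <= q - 1.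
  by move=> l _; rewrite /d; have := ltn_pmod (n %/ q ^ l) q0; lia.
have vald : \sum_(0 <= l < N) d l * q ^ l = n by apply: digits_val.
have valb := val_sum q allb.
have ex : exists l, (l < N) && (count_mem l b != d l).
  case Hh : (has (fun l => count_mem l b != d l) (iota 0 N)).
    by case/hasP: Hh => l; rewrite mem_iota => /andP[_ lN] H; exists l; rewrite H andbT; lia.
  move/hasPn: Hh => Hh.
  have E : \sum_(0 <= l < N) count_mem l b = \sum_(0 <= l < N) d l.
    rewrite !big_seq; apply: eq_bigr => l Hl; by apply/eqP/negPn; apply: Hh.
  have := cnt_sum predT allb; rewrite (eq_bigl (fun _ => true)) // E count_predT.
  rewrite big_mkord -/(digsum q n) => E2; lia.
have ub : forall l, (l < N) && (count_mem l b != d l) -> l <= N by move=> l /andP[/ltnW].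
case: (ex_maxnP ex ub) => l0 /andP[l0N ne0] Hmax.
have agree : forall l, l0 < l < N -> count_mem l b = d l.
  move=> l /andP[ll lN]; apply/eqP/negPn/negP => ne.
  by have := Hmax l; rewrite lN ne => /(_ isT); lia.
have lt0 : count_mem l0 b < d l0.
  rewrite ltn_neqAle ne0 /= leqNgt; apply/negP => H.
  have := lex_lt q0 l0N agree H (fun l lt => dq l (ltn_trans lt l0N)).
  by rewrite vald valb; lia.
have geq0 : forall x, x \in b -> l0 <= x.
  move=> x xb; rewrite leqNgt; apply/negP => xl.
  set s := count (fun y => y < l0) b.
  have s1 : 0 < s by rewrite -has_count; apply/hasP; exists x.
  set F := filter (fun y => l0 <= y) b.
  have sF : size F = size b - s.
    rewrite size_filter -(count_predC (fun y => y < l0) b) -/s.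
    have -> : count (fun y => l0 <= y) b = count (predC (fun y => y < l0)) b.
      by apply: eq_count => y /=; rewrite leqNgt.
    lia.
  have allF : all (fun x => x < N) F by apply/allP => y; rewrite mem_filter => /andP[_ yb]; exact: (allP allb y yb).
  pose A := l0 :: F.
  have allA : all (fun x => x < N) A by rewrite /= l0N.
  have cntA : forall l, count_mem l A = (l0 == l) + (if l0 <= l then count_mem l b else 0).
    by move=> l; rewrite /= count_filter_ge.
  have nA : norm1 q A <= n.
    rewrite -(val_sum q allA) -[X in _ <= X]vald; apply: val_le => l lN; rewrite cntA.
    case: (ltngtP l0 l) => H.
    - by rewrite agree ?H ?lN.
    - by [].
    - by rewrite -H /=.
  have slA := slack q1 nA.
  have sA : size A = 1 + (size b - s) by rewrite /= sF.
  have ssb : s <= size b by apply: count_size.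
  pose b2 := l0 :: nseq (s - 1) 0 ++ F.
  have nb2 : norm1 q b2 = norm1 q A + (s - 1).
    by rewrite /b2 /A !norm1_cons norm1_cat norm1_nseq expn0; lia.
  have sb2 : size b2 = size b by rewrite /b2 /= size_cat size_nseq sF; lia.
  have M2b2 : M2 q n b2.
    by rewrite /M2 sb2 sb eqxx nb2 /=; rewrite sA sb in slA; lia.
  have le2 := mx _ M2b2.
  have all2 : all (fun x => x < N) b2.
    by rewrite /b2 /= all_cat l0N allF andbT; apply/allP => y /nseqP [-> _].
  have cb2 : forall l, count_mem l b2 =
      (l0 == l) + (0 == l) * (s - 1) + (if l0 <= l then count_mem l b else 0).
    by move=> l; rewrite /b2 /= count_cat count_nseq count_filter_ge addnA.
  have l0p : 0 < l0 by lia.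
  have lt2 : norm1 q b < norm1 q b2.
    rewrite -(val_sum q allb) -(val_sum q all2).
    apply: (lex_lt (l0 := l0)) => //.
    - move=> l /andP[H1 H2]; rewrite cb2 (ltn_eqF H1) (ltnW H1).
      by have -> : (0 == l) = false by apply/negbTE; rewrite neq_ltn; apply/orP; left; lia.
    - rewrite cb2 eqxx leqnn; have -> : (0 == l0) = false by apply/negbTE; rewrite neq_ltn l0p.
      by rewrite /=; lia.
  lia.
move=> p pb; have lp := geq0 p pb; split.
  by move=> l pl lN; apply: agree; rewrite lN andbT; lia.
case: (ltngtP l0 p) => H.
- by rewrite agree // H /= (allP allb p pb).
- lia.
- by rewrite -H ltnW.
Qed.


Lemma count_split_eq p (P : pred nat) (s : seq nat) : P p ->
  count (fun x => (p <= x) && P x) s = count_mem p s + count (fun x => (p < x) && P x) s.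
Proof.
move=> Pp; elim: s => [|x s IH] //=; rewrite IH.
case: (ltngtP p x) => H /=; try lia.
by subst x; rewrite Pp; lia.
Qed.

Lemma agree_count N m (X K : seq nat) :
  all (fun x => x < N) X -> all (fun x => x < N) K ->
  (forall l, m < l -> l < N -> count_mem l X = count_mem l K) ->
  forall Q : pred nat, count (fun x => (m < x) && Q x) X = count (fun x => (m < x) && Q x) K.
Proof.
move=> aX aK H Q.
rewrite -(cnt_sum (fun x => (m < x) && Q x) aX) -(cnt_sum (fun x => (m < x) && Q x) aK).
rewrite big_nat_cond [RHS]big_nat_cond; apply: eq_bigr => l /andP[/andP[_ lN] /andP[ml _]].
exact: H.
Qed.

Lemma count_all0 (a : pred nat) (s : seq nat) : all a s -> count (predC a) s = 0.
Proof. by move=> H; have := count_predC a s; move: H; rewrite all_count => /eqP ->; lia. Qed.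

Lemma odd_predS p : 0 < p -> odd p.-1 != odd p.
Proof. by case: p => //= m _; case: (odd m). Qed.

Section Core.
Variables (q n p : nat) (K : seq nat).
Let N := n.+1.
Let d := fun l => (n %/ q ^ l) %% q.
Hypotheses (q1 : 1 < q) (allK : all (fun x => x < N) K) (pN : p < N).
Hypothesis H4 : forall l, p < l -> l < N -> count_mem l K = d l.
Hypothesis H5 : count (fun x => (p <= x) && (odd x == odd p)) K = q - 1.
Hypothesis H6 : 0 < p -> count (fun x => (p.-1 <= x) && (odd x != odd p)) K = q - 1.
Hypothesis H7 : 0 < p -> all (fun x => p.-1 <= x) K.
Hypothesis H8 : 0 < p -> size K = (q - 1).*2.

Lemma core_bound (X : seq nat) : all (fun x => x < N) X ->
  count (fun x => ~~ odd x) X <= q - 1 -> count odd X <= q - 1 -> norm1 q X <= n ->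
  norm1 q X <= norm1 q K.
Proof.
move=> allX ev od nX.
have q0 : 0 < q by lia.
have vald : \sum_(0 <= l < N) d l * q ^ l = n by apply: digits_val.
have par : forall b : bool, count (fun x => odd x == b) X <= q - 1.
  case.
  - by apply: leq_trans od; apply: sub_count => x /eqP ->.
  - by apply: leq_trans ev; apply: sub_count => x /eqP ->.
have sX : size X <= (q - 1).*2.
  have E := count_predC odd X.
  have E' : count (predC odd) X = count (fun x => ~~ odd x) X by apply: eq_count.
  lia.
rewrite -(val_sum q allX) -(val_sum q allK).
apply: lex_le => //; last first.
  move=> l _; apply: leq_trans (par (odd l)); apply: sub_count => x /eqP -> /=; by rewrite eqxx.
move=> ls lsN agr.
have agr2 : forall l, ls < l -> l < N -> count_mem l X = count_mem l K.
  by move=> l H1 H2; apply: agr; rewrite H1 H2.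
have AC := agree_count allX allK agr2.
case: (ltngtP p ls) => Hp.
-
  rewrite H4 //; rewrite leqNgt; apply/negP => Hgt.
  have := lex_lt q0 lsN (a := fun l => count_mem l X) (b := d) _ Hgt.
  have dq : forall l, l < ls -> d l <= q - 1.
    by move=> l _; rewrite /d; have := ltn_pmod (n %/ q ^ l) q0; lia.
  move=> /(_ _ dq); rewrite vald (val_sum q allX).
  have : forall l, ls < l < N -> count_mem l X = d l.
    by move=> l /andP[H1 H2]; rewrite agr2 // H4 //; lia.
  by move=> Hag /(_ Hag); lia.
-
  have p0 : 0 < p by lia.
  case: (ltngtP ls p.-1) => Hq.
  +
    have E1 := AC predT.
    have E2 : count (fun x => (ls < x) && predT x) K = size K.
      apply/eqP; rewrite -all_count; apply: sub_all (H7 p0) => x /=; lia.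
    have E3 := @count_split_eq ls predT X isT.
    have E4 : count (fun x => (ls <= x) && predT x) X <= size X by apply: count_size.
    rewrite (H8 p0) in E2; lia.
  + lia.
  + subst ls.
    have E1 := AC (fun x => odd x != odd p).
    have Pp := odd_predS p0.
    have E2 := @count_split_eq p.-1 (fun x => odd x != odd p) X Pp.
    have E3 := @count_split_eq p.-1 (fun x => odd x != odd p) K Pp.
    have E4 : count (fun x => (p.-1 <= x) && (odd x != odd p)) X <= q - 1.
      apply: leq_trans (par (~~ odd p)); apply: sub_count => x /andP[_]; by case: (odd x); case: (odd p).
    have := H6 p0; lia.
-
  subst ls.
  have E1 := AC (fun x => odd x == odd p).
  have E2 := @count_split_eq p (fun x => odd x == odd p) X (eqxx _).
  have E3 := @count_split_eq p (fun x => odd x == odd p) K (eqxx _).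
  have E4 : count (fun x => (p <= x) && (odd x == odd p)) X <= q - 1.
    apply: leq_trans (par (odd p)); apply: sub_count => x /andP[_] //.
  lia.
Qed.

Lemma core_M2 : count_mem p K < d p -> norm1 q K <= n.
Proof.
move=> Hp; have q0 : 0 < q by lia.
have vald : \sum_(0 <= l < N) d l * q ^ l = n by apply: digits_val.
rewrite -(val_sum q allK) -[X in _ <= X]vald; apply: ltnW.
apply: (lex_lt (l0 := p)) => //.
  by move=> l /andP[H1 H2]; rewrite H4.
move=> l lp; have p0 : 0 < p by lia.
case: (ltngtP l p.-1) => H.
- have : count (pred1 l) K <= count (predC (fun x => p.-1 <= x)) K.
    by apply: sub_count => x /= /eqP ->; lia.
  by rewrite count_all0 ?H7 //; lia.
- lia.
- subst l; rewrite -(H6 p0); apply: sub_count => x /= /eqP ->.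
  by rewrite leqnn odd_predS.
Qed.

End Core.


Lemma all_take_ (P : pred nat) m (s : seq nat) : all P s -> all P (take m s).
Proof. by move=> /allP H; apply/allP => x /mem_take /H. Qed.

Lemma all_drop_ (P : pred nat) m (s : seq nat) : all P s -> all P (drop m s).
Proof. by move=> /allP H; apply/allP => x /mem_drop /H. Qed.

Lemma ordered_nb g : ordered g ->
  [/\ nb_even g <= size g, all (fun x => ~~ odd x) (take (nb_even g) g),
      sorted geq (take (nb_even g) g), all odd (drop (nb_even g) g) &
      sorted leq (drop (nb_even g) g)].
Proof.
case=> e [es ae se ao so].
have -> : nb_even g = e.
  rewrite /nb_even -(cat_take_drop e g) count_cat.
  move: ae; rewrite all_count => /eqP ->; rewrite size_takel //.
  have := count_all0 ao.
  have -> : count (predC odd) (drop e g) = count (fun x => ~~ odd x) (drop e g) by apply: eq_count.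
  lia.
by [].
Qed.

Lemma norm1_drop_le q m (s : seq nat) : norm1 q (drop m s) <= norm1 q s.
Proof. by rewrite -{2}(cat_take_drop m s) norm1_cat; lia. Qed.

Lemma count_all_size (a : pred nat) (s : seq nat) : all a s -> count a s = size s.
Proof. by rewrite all_count => /eqP. Qed.

Lemma norm2_comp q g : 1 < q -> ordered g -> size g = (q - 1).*2 ->
  let X := take (minn (nb_even g) (q - 1)) g ++ drop (maxn (q - 1) (nb_even g)) g in
  [/\ norm2 q g = norm1 q X, count (fun x => ~~ odd x) X <= q - 1,
      count odd X <= q - 1, norm1 q X <= norm1 q g & forall x, x \in X -> x \in g].
Proof.
move=> q1 /ordered_nb [es ae se ao so] sg X.
set e := nb_even g in es ae se ao so X *.
have T : take (minn e (q - 1)) g = take (minn e (q - 1)) (take e g).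
  by rewrite take_takel // geq_minl.
have D : drop (maxn (q - 1) e) g = drop (maxn (q - 1) e - e) (drop e g).
  by rewrite drop_drop subnK // leq_maxr.
split.
- by rewrite /norm2 /X norm1_cat.
- rewrite /X count_cat T D.
  have -> : count (fun x => ~~ odd x) (drop (maxn (q - 1) e - e) (drop e g)) = 0.
    have := count_all0 (all_drop_ (maxn (q - 1) e - e) ao).
    have -> : count (predC odd) (drop (maxn (q - 1) e - e) (drop e g)) =
              count (fun x => ~~ odd x) (drop (maxn (q - 1) e - e) (drop e g)) by apply: eq_count.
    by [].
  have := count_size (fun x => ~~ odd x) (take (minn e (q - 1)) (take e g)).
  rewrite size_take size_takel //; case: ifP => H; lia.
- rewrite /X count_cat T D.
  have -> : count odd (take (minn e (q - 1)) (take e g)) = 0.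
    have := count_all0 (all_take_ (minn e (q - 1)) ae).
    have -> : count (predC (fun x => ~~ odd x)) (take (minn e (q - 1)) (take e g)) =
              count odd (take (minn e (q - 1)) (take e g)) by apply: eq_count => x /=; rewrite negbK.
    by [].
  have := count_size odd (drop (maxn (q - 1) e - e) (drop e g)).
  rewrite -D size_drop sg; lia.
- rewrite /X norm1_cat -{3}(cat_take_drop (minn e (q - 1)) g) norm1_cat leq_add2l.
  have -> : drop (maxn (q - 1) e) g = drop (maxn (q - 1) e - minn e (q - 1)) (drop (minn e (q - 1)) g).
    by rewrite drop_drop subnK //; lia.
  exact: norm1_drop_le.
- by move=> x; rewrite /X mem_cat => /orP[/mem_take | /mem_drop].
Qed.

Lemma norm2_eq q g : nb_even g = q - 1 -> norm2 q g = norm1 q g.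
Proof.
by move=> E; rewrite /norm2 E minnn maxnn -norm1_cat cat_take_drop.
Qed.


Lemma finish q n b mu p :
  1 < q -> size b = (q-1).*2 -> norm1 q b <= n -> 3 * (q-1) <= digsum q n ->
  (forall c, M2 q n c -> norm1 q c <= norm1 q b) ->
  p \in b -> 0 < p -> ordered mu -> size mu = (q-1).*2 ->
  (forall x, x \in mu -> x < n.+1) ->
  nb_even mu = q - 1 ->
  (forall l, p < l -> count_mem l mu = count_mem l b) ->
  count (fun x => (p <= x) && (odd x == odd p)) mu = q - 1 ->
  count (fun x => (p.-1 <= x) && (odd x != odd p)) mu = q - 1 ->
  all (fun x => p.-1 <= x) mu ->
  count_mem p mu < count_mem p b ->
  maximal2 q n mu.
Proof.
move=> q1 sb nb ds mx pb p0 omu smu ltmu nbmu Hab H5 H6 H7 Hlt.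
have [T1 T2] := top_struct q1 sb nb ds mx pb.
have allmu : all (fun x => x < n.+1) mu by apply/allP.
have pN : p < n.+1 := elem_lt q1 nb pb.
have H4 : forall l, p < l -> l < n.+1 -> count_mem l mu = (n %/ q ^ l) %% q.
  by move=> l H1 H2; rewrite Hab // T1.
have nmu : norm1 q mu <= n.
  apply: (core_M2 q1 allmu pN H4 H5 (fun _ => H6) (fun _ => H7) (fun _ => smu)).
  by apply: leq_trans Hlt T2.
have M2mu : M2 q n mu by rewrite /M2 smu eqxx nmu.
split => // g og M2g.
move: (M2g); rewrite /M2 => /andP[/eqP sg ng].
have [E1 E2 E3 E4 E5] := norm2_comp q1 og sg.
rewrite E1 norm2_eq //.
have allX : all (fun x => x < n.+1)
    (take (minn (nb_even g) (q - 1)) g ++ drop (maxn (q - 1) (nb_even g)) g).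
  by apply/allP => x /E5 xg; apply: (elem_lt q1 ng xg).
apply: (core_bound q1 allmu pN H4 H5 (fun _ => H6) (fun _ => H7) (fun _ => smu) allX E2 E3).
by apply: leq_trans E4 ng.
Qed.


Lemma sorted_le_nth (s : seq nat) i j : sorted leq s -> i <= j -> j < size s ->
  nth 0 s i <= nth 0 s j.
Proof.
move=> ss ij js.
have := @sorted_leq_nth _ leq leq_trans leqnn 0 s ss i j.
by apply => //; rewrite unfold_in /=; lia.
Qed.

Lemma sorted_ge_nth (s : seq nat) i j : sorted geq s -> i <= j -> j < size s ->
  nth 0 s j <= nth 0 s i.
Proof.
move=> ss ij js.
have gt : transitive geq by move=> a b c H1 H2; apply: leq_trans H2 H1.
have := @sorted_leq_nth _ geq gt leqnn 0 s ss i j.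
by apply => //; rewrite unfold_in /=; lia.
Qed.

Lemma mem_drop_nth (s : seq nat) m x : x \in drop m s ->
  exists j, [/\ m <= j, j < size s & x = nth 0 s j].
Proof.
move=> /(nthP 0) [j]; rewrite size_drop nth_drop => jl <-.
have jl2 : j < size s - m := jl.
exists (m + j); split; [lia | lia | done].
Qed.

Lemma mem_take_nth (s : seq nat) m x : x \in take m s ->
  exists j, [/\ j < m, j < size s & x = nth 0 s j].
Proof.
move=> /(nthP 0) [j jl <-].
have jl2 : j < size (take m s) := jl.
rewrite size_take in jl2.
have [H1 H2] : j < m /\ j < size s by move: jl2; case: ifP => H; lia.
by exists j; rewrite nth_take.
Qed.

Lemma count_zero_l (s : seq nat) l : 0 < l -> all (fun x => x == 0) s -> count_mem l s = 0.
Proof.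
move=> l0 /allP H; apply/eqP; rewrite -leqn0 leqNgt -has_count; apply/negP => /hasP [x xs /eqP E].
by have := H x xs; rewrite E; move/eqP; lia.
Qed.

Lemma finish0 q n b :
  1 < q -> size b = (q-1).*2 -> norm1 q b <= n -> 3 * (q-1) <= digsum q n ->
  (forall c, M2 q n c -> norm1 q c <= norm1 q b) -> ordered b ->
  q - 1 < nb_even b -> nth 0 b (q - 1) = 0 -> maximal2 q n b.
Proof.
move=> q1 sb nb ds mx ob ek p0.
have M2b : M2 q n b by rewrite /M2 sb eqxx nb.
have [es ae se ao so] := ordered_nb ob.
set e := nb_even b in es ae se ao so ek *.
set k := q - 1 in sb ds ek p0 *.
pose K := take k b ++ drop e b.
have Hn2 : norm2 q b = norm1 q K.
  rewrite /norm2 -/e -/k norm1_cat /K.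
  have -> : minn e k = k by lia.
  by have -> : maxn k e = e by lia.
have kb : k < size b by lia.
have pb : 0 \in b by rewrite -p0 mem_nth.
have [T1 T2] := top_struct q1 sb nb ds mx pb.
have Ez : all (fun x => x == 0) (drop k (take e b)).
  apply/allP => x /mem_drop_nth [j [kj js ->]].
  rewrite size_takel // in js.
  have := sorted_ge_nth se kj; rewrite size_takel // => /(_ js).
  by rewrite !nth_take // p0; lia.
have Eb : b = take k b ++ drop k (take e b) ++ drop e b.
  by rewrite -{1}(cat_take_drop e b) -{1}(cat_take_drop k (take e b)) take_takel ?catA //; lia.
have allK : all (fun x => x < n.+1) K.
  by apply/allP => x; rewrite mem_cat => /orP[/mem_take|/mem_drop] xb; apply: (elem_lt q1 nb xb).
have H4 : forall l, 0 < l -> l < n.+1 -> count_mem l K = (n %/ q ^ l) %% q.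
  move=> l l0 lN; rewrite -T1 // [in RHS]Eb /K !count_cat.
  by rewrite (count_zero_l l0 Ez).
have H5 : count (fun x => (0 <= x) && (odd x == odd 0)) K = k.
  rewrite /K count_cat.
  have -> : count (fun x => (0 <= x) && (odd x == odd 0)) (drop e b) = 0.
    have E := count_all0 ao; rewrite -[RHS]E; apply: eq_count => x /=; by case: (odd x).
  have sk : size (take k b) = k by rewrite size_takel //; lia.
  rewrite addn0 -[X in _ = X]sk.
  apply/eqP; rewrite -all_count.
  have A1 : all (fun x => ~~ odd x) (take k b).
    by rewrite -(take_takel b (ltnW ek)); apply: all_take_.
  by apply: sub_all A1 => x /=; case: (odd x).
split => // g og M2g.
move: (M2g); rewrite /M2 => /andP[/eqP sg ng].
have [E1 E2 E3 E4 E5] := norm2_comp q1 og sg.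
rewrite E1 Hn2.
have allX : all (fun x => x < n.+1)
    (take (minn (nb_even g) (q - 1)) g ++ drop (maxn (q - 1) (nb_even g)) g).
  by apply/allP => x /E5 xg; apply: (elem_lt q1 ng xg).
have pN : 0 < n.+1 by [].
apply: (core_bound q1 allK pN H4 H5 _ _ _ allX E2 E3) => //.
by apply: leq_trans E4 ng.
Qed.


Lemma sorted_cat_ (r : rel nat) (s1 s2 : seq nat) : transitive r ->
  sorted r s1 -> sorted r s2 -> (forall x y, x \in s1 -> y \in s2 -> r x y) ->
  sorted r (s1 ++ s2).
Proof.
move=> tr ss1 ss2 H; case: s1 ss1 H => [|x s1] //= ss1 H.
rewrite cat_path ss1 /= (path_sortedE tr) ss2 andbT.
by apply/allP => y ys; apply: H => //; apply: mem_last.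
Qed.

Lemma sorted_nseq_ (r : rel nat) m x : reflexive r -> sorted r (nseq m x).
Proof.
move=> rr; case: m => [|m] //=; elim: m => [|m IH] //=; by rewrite rr.
Qed.

Lemma cnt_all (P : pred nat) (s : seq nat) : (forall x, x \in s -> P x) -> count P s = size s.
Proof. by move=> H; apply/eqP; rewrite -all_count; apply/allP. Qed.

Lemma cnt_none (P : pred nat) (s : seq nat) : (forall x, x \in s -> ~~ P x) -> count P s = 0.
Proof.
move=> H; apply/eqP; rewrite -leqn0 leqNgt -has_count; apply/negP => /hasP [x xs Px].
by have := H x xs; rewrite Px.
Qed.

Lemma map_iota_const (F : nat -> nat) c a m :
  (forall j, a <= j < a + m -> F j = c) -> map F (iota a m) = nseq m c.
Proof.
elim: m a => [|m IH] a H //=; rewrite H ?IH //; [move=> j Hj; apply: H| ]; lia.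
Qed.


Lemma case_low q n b :
  1 < q -> size b = (q-1).*2 -> norm1 q b <= n -> 3 * (q-1) <= digsum q n ->
  (forall c, M2 q n c -> norm1 q c <= norm1 q b) -> ordered b ->
  nb_even b < q - 1 -> maximal2 q n (mu_low q b).
Proof.
move=> q1 sb nb ds mx ob ek.
have [es ae se ao so] := ordered_nb ob.
set e := nb_even b in es ae se ao so ek *.
set k := q - 1 in sb ds ek *.
set E := take e b in ae se.
set O := drop e b in ao so.
have sE : size E = e by rewrite size_takel.
have sO : size O = k.*2 - e by rewrite size_drop sb.
set p := nth 0 b (q - 2).
have pO : p = nth 0 O (k - 1 - e) by rewrite /O nth_drop /p; congr nth; lia.
have idxO : k - 1 - e < size O by rewrite sO; lia.
have pod : odd p by rewrite pO; apply: (allP ao); apply: mem_nth.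
have p0 : 0 < p by move: pod; case: (p).
pose g := fun x => if x <= p then p - 1 else x.
set D := drop k b.
have DO : D = drop (k - e) O by rewrite /D /O drop_drop subnK //; lia.
set T := take (k - e) O.
have bE : b = E ++ T ++ D by rewrite /E /T DO cat_take_drop cat_take_drop.
have Hmu : mu_low q b = map g E ++ nseq (k - e) (p - 1) ++ D.
  rewrite /mu_low -/p sb.
  have -> : k.*2 = e + ((k - e) + k) by lia.
  rewrite iotaD iotaD !map_cat; congr (_ ++ _ ++ _).
  - rewrite /E -(map_nth_iota0 0) ?es // -map_comp; apply/eq_in_map => j.
    rewrite mem_iota /g /= => Hj.
    by have -> : j < q - 1 by lia.
  - apply: map_iota_const => j /andP[H1 H2].
    have -> : j < q - 1 by lia.
    have -> : nth 0 b j <= p.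
      have -> : nth 0 b j = nth 0 O (j - e) by rewrite /O nth_drop; congr nth; lia.
      rewrite pO; apply: sorted_le_nth => //; lia.
    by [].
  - rewrite add0n (_ : e + (k - e) = k); last by lia.
    rewrite (_ : map _ _ = map (nth 0 b) (iota k k)); last first.
      apply/eq_in_map.
      by move=> j; rewrite mem_iota => /andP[H1 _]; have -> : (j < q - 1) = false by lia.
    by rewrite map_nth_iota ?sb; [rewrite take_oversize // /D size_drop sb; lia | lia].
have memE : forall x, x \in E -> ~~ odd x by move=> x /(allP ae).
have memT : forall x, x \in T -> odd x && (x <= p).
  move=> x xT; have xO : x \in O by apply: mem_take xT.
  rewrite (allP ao x xO) /=.
  case: (mem_take_nth xT) => j [j1 j2 ->]; rewrite pO; apply: sorted_le_nth => //; lia.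
have memD : forall x, x \in D -> odd x && (p <= x).
  move=> x; rewrite DO => xD; have xO : x \in O by apply: mem_drop xD.
  rewrite (allP ao x xO) /=.
  case: (mem_drop_nth xD) => j [j1 j2 ->]; rewrite pO; apply: sorted_le_nth => //; lia.
have sT : size T = k - e by rewrite size_takel // sO; lia.
have pT : p \in T.
  rewrite pO -(nth_take 0 (n0 := k - e)); last by lia.
  by apply: mem_nth; rewrite sT; lia.
have pb : p \in b by rewrite bE !mem_cat pT orbT.
have sD : size D = k by rewrite /D size_drop sb; lia.
have pm1 : odd (p - 1) = false by move: pod p0; case: (p) => //= m; rewrite subn1 /=; case: (odd m).
have gev : forall x, ~~ odd x -> ~~ odd (g x).
  by move=> x; rewrite /g; case: ifP => // _ _; rewrite pm1.
have gge : forall x, p - 1 <= g x by move=> x; rewrite /g; case: ifP => //; lia.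
have godd : forall x, x \in E -> odd (g x) = false by move=> x /memE /gev /negbTE.
have allN : forall x, x \in b -> x < n.+1 by move=> x xb; exact: (elem_lt q1 nb xb).
rewrite Hmu; apply: (finish q1 sb nb ds mx pb p0).
- exists k; rewrite catA take_size_cat ?drop_size_cat ?size_cat ?size_map ?size_nseq ?sE; try lia.
  split.
  + rewrite sD; lia.
  + rewrite all_cat; apply/andP; split; apply/allP => x.
      by case/mapP => y yE ->; apply: gev; apply: memE.
    by move=> /nseqP [-> _]; rewrite pm1.
  + apply: sorted_cat_.
    * by move=> a b0 c H1 H2; apply: leq_trans H2 H1.
    * apply: homo_sorted se => x y; rewrite /g /=; case: ifP; case: ifP; lia.
    * by apply: sorted_nseq_ => x; rewrite /geq /= leqnn.
    * by move=> x y /mapP [z _ ->] /nseqP [-> _]; apply: gge.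
  + by apply/allP => x /memD /andP[].
  + by rewrite DO; exact: (subseq_sorted leq_trans (drop_subseq O (k - e)) so).
- by rewrite !size_cat size_map size_nseq sD sE; lia.
- move=> x; rewrite !mem_cat => /orP[/mapP [y yE ->] | /orP[/nseqP [-> _]|xD]].
  + rewrite /g; case: ifP => _; last by apply: allN; rewrite bE mem_cat yE.
    by have := allN p pb; lia.
  + by have := allN p pb; lia.
  + by apply: allN; rewrite bE !mem_cat xD !orbT.
- rewrite /nb_even !count_cat count_map count_nseq pm1 /= cnt_all.
    by rewrite (cnt_none (s := D)) ?size_map ?sE; [lia | move=> x /memD /andP[-> _]].
  by move=> x xE; rewrite /= godd.
- move=> l pl; rewrite bE !count_cat count_map count_nseq.
  rewrite (cnt_none (s := T)); last by move=> x /memT /andP[_ H]; apply/eqP; lia.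
  have -> : pred1 l (p - 1) = false by apply/negbTE/eqP; lia.
  rewrite /= mul0n.
  congr (_ + _); apply: eq_count => x /=; rewrite /g; case: ifP => H; apply/eqP/eqP; lia.
- rewrite !count_cat count_map count_nseq pod.
  rewrite (cnt_none (s := E)); last by move=> x xE /=; rewrite godd //; case: (p <= g x).
  rewrite pm1 /= andbF mul0n add0n cnt_all ?sD //.
  by move=> x /memD /andP[-> ->].
- rewrite !count_cat count_map count_nseq pod pm1.
  have -> : (p.-1 <= p - 1) = true by lia.
  rewrite mul1n (cnt_none (s := D)); last by move=> x /memD /andP[-> _]; rewrite andbF.
  rewrite cnt_all ?sE; first by lia.
  by move=> x xE /=; rewrite godd //= andbT; have := gge x; lia.
- rewrite !all_cat; apply/and3P; split; apply/allP => x.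
  + by case/mapP => y _ ->; have := gge y; lia.
  + by move=> /nseqP [-> _]; lia.
  + by move=> /memD /andP[_ H]; lia.
- rewrite bE !count_cat count_map count_nseq.
  rewrite (cnt_none (s := E)); last by move=> x xE /=; apply/negP => /eqP E0; have := godd x xE; rewrite E0 pod.
  have -> : pred1 p (p - 1) = false by apply/negbTE/eqP; lia.
  have : 0 < count_mem p T by rewrite -has_count; apply/hasP; exists p; [exact: pT | rewrite /= eqxx].
  rewrite (cnt_none (s := E)) /=; last by move=> x xE /=; apply/negP => /eqP E0; have := memE x xE; rewrite E0 pod.
  lia.
Qed.


Lemma case_high q n b :
  1 < q -> size b = (q-1).*2 -> norm1 q b <= n -> 3 * (q-1) <= digsum q n ->
  (forall c, M2 q n c -> norm1 q c <= norm1 q b) -> ordered b ->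
  q - 1 < nb_even b -> maximal2 q n (mu_high q b).
Proof.
move=> q1 sb nb ds mx ob ek.
have [es ae se ao so] := ordered_nb ob.
set e := nb_even b in es ae se ao so ek *.
set k := q - 1 in sb ds ek *.
set E := take e b in ae se.
set O := drop e b in ao so.
have sE : size E = e by rewrite size_takel.
have sO : size O = k.*2 - e by rewrite size_drop sb.
set p := nth 0 b k.
have pE : p = nth 0 E k by rewrite /E nth_take.
case: (posnP p) => [p0 | p0].
  have -> : mu_high q b = b.
    rewrite /mu_high -/k -/p p0.
    rewrite -[in RHS](take_size b) -(map_nth_iota0 0) //.
    apply/eq_in_map => j _ /=; case: ifP => // /andP[_ H]; lia.
  exact: (finish0 q1 sb nb ds mx ob ek p0).
set A := take k E.
set M := drop k E.
have bE : b = A ++ M ++ O by rewrite /A /M catA cat_take_drop /E /O cat_take_drop.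
have sA : size A = k by rewrite /A size_takel // sE; lia.
have sM : size M = e - k by rewrite /M size_drop sE.
pose h := fun x => if x <= p then p - 1 else x.
have Hmu : mu_high q b = A ++ nseq (e - k) (p - 1) ++ map h O.
  rewrite /mu_high -/k -/p sb.
  have -> : k.*2 = k + ((e - k) + (k.*2 - e)) by lia.
  rewrite iotaD iotaD !map_cat; congr (_ ++ _ ++ _).
  - rewrite /A /E take_takel; last by lia.
    rewrite -(map_nth_iota0 0); last by lia.
    apply/eq_in_map => j; rewrite mem_iota /= => Hj.
    by have -> : (k <= j) = false by lia.
  - apply: map_iota_const => j /andP[H1 H2].
    have -> : k <= j by lia.
    have -> : nth 0 b j <= p.
      have -> : nth 0 b j = nth 0 E j by rewrite /E nth_take //; lia.
      rewrite pE; apply: sorted_ge_nth => //; lia.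
    by [].
  - rewrite add0n (_ : k + (e - k) = e); last by lia.
    have -> : O = map (nth 0 b) (iota e (k.*2 - e)).
      by rewrite map_nth_iota ?sb // take_oversize // -/O sO.
    rewrite -map_comp; apply/eq_in_map => j; rewrite mem_iota => /andP[H1 _] /=.
    by have -> : k <= j by lia.
have memA : forall x, x \in A -> ~~ odd x && (p <= x).
  move=> x xA; have xE : x \in E by apply: mem_take xA.
  rewrite (allP ae x xE) /=.
  case: (mem_take_nth xA) => j [j1 j2 ->]; rewrite pE; apply: sorted_ge_nth => //; lia.
have memM : forall x, x \in M -> ~~ odd x && (x <= p).
  move=> x xM; have xE : x \in E by apply: mem_drop xM.
  rewrite (allP ae x xE) /=.
  case: (mem_drop_nth xM) => j [j1 j2 ->]; rewrite pE; apply: sorted_ge_nth => //; lia.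
have memO : forall x, x \in O -> odd x by move=> x /(allP ao).
have pM : p \in M.
  rewrite pE -[k]addn0 -nth_drop; apply: mem_nth; rewrite sM; lia.
have pb : p \in b by rewrite bE !mem_cat pM orbT.
have pev : odd p = false by apply/negbTE; case/andP: (memM p pM).
have pm1 : odd (p - 1) = true by move: pev p0; case: (p) => //= m; rewrite subn1 /= => /negbFE.
have hod : forall x, odd x -> odd (h x) by move=> x; rewrite /h; case: ifP.
have hge : forall x, p - 1 <= h x by move=> x; rewrite /h; case: ifP => //; lia.
have allN : forall x, x \in b -> x < n.+1 by move=> x xb; exact: (elem_lt q1 nb xb).
rewrite Hmu; apply: (finish q1 sb nb ds mx pb p0).
- exists k; rewrite take_size_cat ?drop_size_cat //.
  split.
  + rewrite !size_cat size_nseq size_map sA; lia.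
  + by apply/allP => x /memA /andP[].
  + rewrite /A; apply: (subseq_sorted _ (take_subseq E k) se).
    by move=> a b0 c H1 H2; apply: leq_trans H2 H1.
  + rewrite all_cat; apply/andP; split; apply/allP => x.
      by move=> /nseqP [-> _].
    by case/mapP => y yO ->; apply: hod; apply: memO.
  + apply: sorted_cat_ => //.
    * exact: leq_trans.
    * by apply: sorted_nseq_.
    * apply: homo_sorted so => x y; rewrite /h /=; case: ifP; case: ifP; lia.
    * by move=> x y /nseqP [-> _] /mapP [z _ ->]; apply: hge.
- by rewrite !size_cat size_map size_nseq sA sO; lia.
- move=> x; rewrite !mem_cat => /orP[xA | /orP[/nseqP [-> _]| /mapP [y yO ->]]].
  + by apply: allN; rewrite bE mem_cat xA.
  + by have := allN p pb; lia.
  + rewrite /h; case: ifP => _; first by have := allN p pb; lia.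
    by apply: allN; rewrite bE !mem_cat yO !orbT.
- rewrite /nb_even !count_cat count_map count_nseq pm1 /= cnt_all.
    by rewrite (cnt_none (s := O)) ?sA; [lia | move=> x xO /=; rewrite hod ?memO].
  by move=> x /memA /andP[].
- move=> l pl; rewrite bE !count_cat count_map count_nseq.
  rewrite (cnt_none (s := M)); last by move=> x /memM /andP[_ H]; apply/negP => /eqP E0; lia.
  have -> : pred1 l (p - 1) = false by apply/negbTE/eqP; lia.
  rewrite /= mul0n add0n; congr (_ + _); apply: eq_count => x /=; rewrite /h; case: ifP => H; apply/eqP/eqP; lia.
- rewrite !count_cat count_map count_nseq pev.
  rewrite (cnt_none (s := O)); last by move=> x xO /=; rewrite hod ?memO //; case: (p <= h x).
  rewrite pm1 /= andbF mul0n addn0 cnt_all; first by rewrite sA ?addn0.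
  by move=> x /memA /andP[H1 H2]; rewrite H2 /=; move: H1; case: (odd x).
- rewrite !count_cat count_map count_nseq pev pm1.
  have -> : (p.-1 <= p - 1) = true by lia.
  rewrite mul1n (cnt_none (s := A)); last by move=> x /memA /andP[H _]; move: H; case: (odd x) => //= _; rewrite andbF.
  rewrite cnt_all ?sO; first by lia.
  by move=> x xO /=; rewrite hod ?memO //= andbT; have := hge x; lia.
- rewrite !all_cat; apply/and3P; split; apply/allP => x.
  + by move=> /memA /andP[_ H]; lia.
  + by move=> /nseqP [-> _]; lia.
  + by case/mapP => y _ ->; have := hge y; lia.
- rewrite bE !count_cat count_map count_nseq.
  rewrite (cnt_none (s := O)); last by move=> x xO /=; apply/negP => /eqP E0; have := hod x (memO x xO); rewrite E0 pev.
  have -> : pred1 p (p - 1) = false by apply/negbTE/eqP; lia.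
  have : 0 < count_mem p M by rewrite -has_count; apply/hasP; exists p; [exact: pM | rewrite /= eqxx].
  rewrite (cnt_none (s := O)) /=; last by move=> x xO /=; apply/negP => /eqP E0; have := memO x xO; rewrite E0 pev.
  lia.
Qed.

Theorem propositionA2 (q n : nat) (b : seq nat) :
  2 <= q -> 0 < n -> (q - 1) %| n -> 3 * (q - 1) <= digsum q n ->
  M2 q n b -> ordered b -> maximal1 q n b ->
  [/\ nb_even b = q - 1 -> norm1 q b = norm2 q b /\ maximal2 q n b,
      nb_even b < q - 1 -> maximal2 q n (mu_low q b) &
      q - 1 < nb_even b -> maximal2 q n (mu_high q b)].
Proof.
move=> q1 _ _ ds M2b ob [_ mx].
move: (M2b); rewrite /M2 => /andP[/eqP sb nb].
split.
- move=> E; split; first by rewrite norm2_eq.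
  split => // g og M2g.
  move: (M2g); rewrite /M2 => /andP[/eqP sg ng].
  have [E1 E2 E3 E4 E5] := norm2_comp q1 og sg.
  rewrite E1 norm2_eq //.
  by apply: leq_trans E4 (mx _ M2g).
- exact: case_low.
- exact: case_high.
Qed.
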